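(* Let $A$ be a dilation, $X$ a concave ball quasi-Banach function space, $q\in[1,\infty)$, $d\in\mathbb Z_+$ and $s\in(0,1]$. Then $\mathcal L^A_{X,q,d,s}(\mathbb R^n)=\mathcal L^A_{X,q,d}(\mathbb R^n)$ with equivalent quasi-norms.
   Context: A real $n\times n$ matrix $A$ is a dilation if all its eigenvalues have modulus $>1$. Let $b:=|\det A|$. Fix an open ellipsoid $\Delta$ symmetric about the origin with $|\Delta|=1$ and $r>1$ with $\Delta\subset r\Delta\subset A\Delta$; put $B_k:=A^k\Delta$ ($k\in\mathbb Z$) and $\mathcal B:=\{x+B_k:x\in\mathbb R^n,k\in\mathbb Z\}$. Let $\mathscr M(\mathbb R^n)$ be the set of measurable functions. A quasi-normed linear space $X\subset\mathscr M(\mathbb R^n)$ whose quasi-norm is defined on all of $\mathscr M(\mathbb R^n)$ is a ball quasi-Banach function space if: (i) $\|f\|_X=0\Rightarrow f=0$ a.e.; (ii) $|g|\le|f|$ a.e. $\Rightarrow\|g\|_X\le\|f\|_X$; (iii) $0\le f_m\uparrow f$ a.e. $\Rightarrow\|f_m\|_X\uparrow\|f\|_X$; (iv) $\mathbf 1_B\in X$ for all $B\in\mathcal B$. $X$ is concave if there is $C>0$ such that $\sum_{k\in\mathbb N}\|f_k\|_X\le C\|\sum_{k\in\mathbb N}|f_k|\|_X$ for all $\{f_k\}\subset\mathscr M(\mathbb R^n)$. $\mathcal P_d$ denotes polynomials of degree $\le d$; $P^d_Bg$ is the unique $P\in\mathcal P_d$ with $\int_B(g-P)h=0$ for all $h\in\mathcal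 P_d$. $\mathcal L^A_{X,q,d,s}(\mathbb R^n)$ is the set of $f\in L^q_{\mathrm{loc}}$ with $$\|f\|_{\mathcal L^A_{X,q,d,s}}:=\sup\left\|\left\{\sum_{i=1}^m\left[\frac{\lambda_i}{\|\mathbf 1_{B^{(i)}}\|_X}\right]^s\mathbf 1_{B^{(i)}}\right\}^{1/s}\right\|_X^{-1}\sum_{j=1}^m\frac{\lambda_j|B^{(j)}|}{\|\mathbf 1_{B^{(j)}}\|_X}\left[\frac1{|B^{(j)}|}\int_{B^{(j)}}|f-P^d_{B^{(j)}}f|^q\right]^{1/q}<\infty$$ (sup over $m\in\mathbb N$, $B^{(j)}\in\mathcal B$, $\lambda_j\ge0$ with $\sum_j\lambda_j\neq0$). $\mathcal L^A_{X,q,d}(\mathbb R^n)$ is the set of $f\in L^q_{\mathrm{loc}}$ with $\|f\|_{\mathcal L^A_{X,q,d}}:=\sup_{B\in\mathcal B}\frac{|B|}{\|\mathbf 1_B\|_X}\left[\frac1{|B|}\int_B|f-P^d_Bf|^q\right]^{1/q}<\infty$. Elements are identified modulo $\mathcal P_d$. *)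

(* Defs.v *)
From HB Require Import structures.
From mathcomp Require Import all_boot all_order all_algebra.
From mathcomp Require Import all_classical all_reals all_analysis.
From mathcomp Require Import complex.

Set Implicit Arguments.
Unset Strict Implicit.
Unset Printing Implicit Defensive.

Import Order.TTheory GRing.Theory Num.Theory.
Import numFieldNormedType.Exports.
Local Open Scope classical_set_scope.
Local Open Scope ring_scope.

Section Defs.
Variable R : realType.
Variable n : nat.

(* Points of R^n are n-tuples of reals; n.-tuple R carries the library's
   product (= Borel) sigma-algebra. *)
Notation pt := (n.-tuple R).

Definition tadd (x y : pt) : pt := [tuple tnth x i + tnth y i | i < n].
Definition tscale (c : R) (x : pt) : pt := [tuple c * tnth x i | i < n].
Definition mxact (M : 'M[R]_n) (x : pt) : pt :=
  [tuple \sum_(j < n) M i j * tnth x j | i < n].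

Definition dilation (A : 'M[R]_n) : Prop :=
  forall l : R[i], eigenvalue (map_mx (fun x : R => (x%:C)%C) A) l -> 1 < `|l|.

Definition sym_open_ellipsoid (D : set pt) : Prop :=
  exists M : 'M[R]_n, \det M != 0 /\
    D = [set x | \sum_(i < n) (tnth (mxact M x) i) ^+ 2 < 1].

Definition image_by (f : pt -> pt) (E : set pt) : set pt := [set f y | y in E].

(* B_k = A^k Delta, k in Z (for k < 0 written as a preimage under A^{-k}) *)
Definition Bk (A : 'M[R]_n) (D : set pt) (k : int) : set pt :=
  match k with
  | Posz m => image_by (iter m (mxact A)) D
  | Negz m => [set x | D (iter m.+1 (mxact A) x)]
  end.

Definition dball (A : 'M[R]_n) (D : set pt) (B : set pt) : Prop :=
  exists (x : pt) (k : int), B = image_by (tadd x) (Bk A D k).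

Definition cube (r : R) : set pt := [set x | forall i, `|tnth x i| <= r].

Definition is_lebesgue (mu : {measure set pt -> \bar R}) : Prop :=
  (forall (a : pt) (E : set pt), measurable E ->
      mu (image_by (tadd a) E) = mu E) /\
  mu [set x | forall i, 0 <= tnth x i < 1] = 1%E.

Local Open Scope ereal_scope.

(* ball quasi-Banach function space; X = { f measurable | normX f < oo } *)
Definition ball_qBfs (mu : {measure set pt -> \bar R}) (A : 'M[R]_n) (D : set pt)
    (normX : (pt -> R) -> \bar R) : Prop :=
  (forall f : pt -> R, 0 <= normX f) /\
  normX (fun _ => 0%R) = 0 /\
  (forall (f : pt -> R) (c : R), measurable_fun setT f -> normX f < +oo ->
      normX (fun x => c * f x)%R = (`|c|)%:E * normX f) /\
  (exists K : R, (1 <= K)%R /\ forall f g : pt -> R,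
      measurable_fun setT f -> measurable_fun setT g ->
      normX f < +oo -> normX g < +oo ->
      normX (fun x => f x + g x)%R <= K%:E * (normX f + normX g)) /\
  (forall f : pt -> R, measurable_fun setT f -> normX f = 0 ->
      {ae mu, forall x, f x = 0%R}) /\
  (forall f g : pt -> R, measurable_fun setT f -> measurable_fun setT g ->
      {ae mu, forall x, `|g x| <= `|f x|}%R -> normX g <= normX f) /\
  (forall (fs : nat -> pt -> R) (f : pt -> R),
      (forall m, measurable_fun setT (fs m)) -> measurable_fun setT f ->
      {ae mu, forall x, (forall m, 0 <= fs m x <= fs m.+1 x)%R /\
                        (fs ^~ x @ \oo --> f x)} ->
      normX (fs m) @[m --> \oo] --> normX f) /\
  (forall B, dball A D B -> normX (\1_B) < +oo).

(* concavity (stated for finite families) *)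
Definition concave_space (normX : (pt -> R) -> \bar R) : Prop :=
  exists C : R, (0 < C)%R /\ forall (N : nat) (f : nat -> pt -> R),
    (forall k, measurable_fun setT (f k)) ->
    \sum_(k < N) normX (f k) <= C%:E * normX (fun x => \sum_(k < N) `|f k x|)%R.

Definition Lqloc (mu : {measure set pt -> \bar R}) (q : R) (f : pt -> R) : Prop :=
  measurable_fun setT f /\
  forall r : R, \int[mu]_(x in cube r) ((`|f x| `^ q)%:E) < +oo.

Definition monom (a : {ffun 'I_n -> nat}) (x : pt) : R :=
  (\prod_(i < n) tnth x i ^+ a i)%R.

Definition polyd (d : nat) (P : pt -> R) : Prop :=
  exists c : {ffun 'I_n -> 'I_d.+1} -> R,
    P = (fun x => \sum_(a : {ffun 'I_n -> 'I_d.+1} | (\sum_(i < n) (a i : nat) <= d)%N)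
                    c a * monom [ffun i => (a i : nat)] x)%R.

Definition is_projPd (mu : {measure set pt -> \bar R}) (d : nat) (B : set pt)
    (g P : pt -> R) : Prop :=
  polyd d P /\ forall h : pt -> R, polyd d h ->
    \int[mu]_(x in B) ((g x - P x) * h x)%R%:E = 0.

Definition projPd (mu : {measure set pt -> \bar R}) (d : nat) (B : set pt)
    (g : pt -> R) : pt -> R :=
  xget (fun _ => 0%R) (is_projPd mu d B g).

Definition osc (mu : {measure set pt -> \bar R}) (q : R) (d : nat) (B : set pt)
    (f : pt -> R) : R :=
  (fine (\int[mu]_(x in B) ((`|f x - projPd mu d B f x| `^ q)%:E))
     / fine (mu B)) `^ q^-1.

Definition normL (mu : {measure set pt -> \bar R}) (A : 'M[R]_n) (D : set pt)
    (normX : (pt -> R) -> \bar R) (q : R) (d : nat) (f : pt -> R) : \bar R :=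
  ereal_sup [set ((fine (mu B) / fine (normX (\1_B))) * osc mu q d B f)%R%:E
             | B in dball A D].

Definition normLs (mu : {measure set pt -> \bar R}) (A : 'M[R]_n) (D : set pt)
    (normX : (pt -> R) -> \bar R) (q : R) (d : nat) (s : R) (f : pt -> R) : \bar R :=
  ereal_sup [set v | exists (m : nat) (B : 'I_m -> set pt) (lam : 'I_m -> R),
    [/\ forall j, dball A D (B j),
        forall j, (0 <= lam j)%R,
        (\sum_(j < m) lam j)%R != 0%R &
        v = ((\sum_(j < m) lam j * fine (mu (B j)) / fine (normX (\1_(B j)))
                              * osc mu q d (B j) f)
             / fine (normX (fun x => (\sum_(i < m)
                   (lam i / fine (normX (\1_(B i)))) `^ s * \1_(B i) x) `^ s^-1)))%R%:E]].

End Defs.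

(* Main.v *)
Require Import Defs.
From HB Require Import structures.
From mathcomp Require Import all_boot all_order all_algebra.
From mathcomp Require Import all_classical all_reals all_analysis.
From mathcomp Require Import complex.
From mathcomp.algebra_tactics Require Import lra.
Import Order.TTheory GRing.Theory Num.Theory.
Import numFieldNormedType.Exports.
Local Open Scope classical_set_scope.
Local Open Scope ring_scope.

Section Helpers.
Variable R : realType.
Variable n : nat.
Notation pt := (n.-tuple R).

Lemma dil_det (A : 'M[R]_n) : dilation A -> \det A != 0.
Proof.
move=> dA; apply/negP => /eqP d0.
suff: eigenvalue (map_mx (fun x : R => (x%:C)%C) A) 0.
  by move/dA; rewrite normr0 ltr10.
have -> : map_mx (fun x : R => (x%:C)%C) A = map_mx (real_complex R) A by [].
rewrite /eigenvalue /eigenspace.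
have -> : (0 : complex R)%:M = 0 :> 'M[complex R]_n by apply/matrixP => i j; rewrite !mxE mul0rn.
rewrite subr0 kermx_eq0 row_free_unit unitmxE det_map_mx d0 rmorph0 unitr0.
by [].
Qed.

Lemma mxact_mul (M N : 'M[R]_n) x : mxact M (mxact N x) = mxact (M *m N) x.
Proof.
apply: eq_from_tnth => i; rewrite /mxact !tnth_mktuple.
under eq_bigr => j _ do rewrite tnth_mktuple big_distrr.
rewrite exchange_big /=; apply: eq_bigr => k _.
rewrite !mxE big_distrl /=; apply: eq_bigr => j _; by rewrite mulrA.
Qed.

Lemma mxact1 (x : pt) : mxact (1%:M : 'M[R]_n) x = x.
Proof.
apply: eq_from_tnth => i; rewrite /mxact !tnth_mktuple.
rewrite (bigD1 i) //= big1 ?addr0; first by rewrite mxE eqxx mul1r.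
by move=> j /negbTE ji; rewrite mxE eq_sym ji mul0r.
Qed.

Lemma mxact_meas (M : 'M[R]_n) : measurable_fun setT (mxact M).
Proof.
apply/measurable_fun_tnthP => i.
have -> : (@tnth n R)^~ i \o mxact M = fun x => \sum_(j < n) M i j * tnth x j.
  by apply: funext => x /=; rewrite tnth_mktuple.
apply: measurable_sum => j.
apply: measurable_realfun.measurable_funM => //; exact: measurable_tnth.
Qed.


Lemma image_by_can (f g : pt -> pt) (E : set pt) :
  cancel f g -> cancel g f -> image_by f E = g @^-1` E.
Proof.
move=> fK gK; apply/seteqP; split => [y [x Ex <-]|y Ey] /=; first by rewrite fK.
by exists (g y) => //; rewrite gK.
Qed.

Lemma iter_can (f g : pt -> pt) m : cancel f g -> cancel (iter m f) (iter m g).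
Proof.
move=> fK; elim: m => [//|m IH] x.
by rewrite [iter m.+1 g _]iterSr [iter m.+1 f _]iterS fK IH.
Qed.

Lemma iter_meas (f : pt -> pt) m : measurable_fun setT f -> measurable_fun setT (iter m f).
Proof.
move=> mf; elim: m => [|m IH]; first exact: measurable_id.
have -> : iter m.+1 f = f \o iter m f by apply: funext => x; rewrite iterS.
exact: measurableT_comp.
Qed.

Lemma tadd_meas (x : pt) : measurable_fun setT (tadd x).
Proof.
apply/measurable_fun_tnthP => i.
have -> : (@tnth n R)^~ i \o tadd x = fun y => tnth x i + tnth y i.
  by apply: funext => y /=; rewrite tnth_mktuple.
apply: measurable_realfun.measurable_funD => //; exact: measurable_tnth.
Qed.

Lemma taddK (x : pt) : cancel (tadd x) (tadd [tuple - tnth x i | i < n]).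
Proof.
move=> y; apply: eq_from_tnth => i; rewrite !tnth_mktuple.
by rewrite addrA addNr add0r.
Qed.

Lemma taddK' (x : pt) : cancel (tadd [tuple - tnth x i | i < n]) (tadd x).
Proof.
move=> y; apply: eq_from_tnth => i; rewrite !tnth_mktuple.
by rewrite addrA addrN add0r.
Qed.

Lemma ellipsoid_meas (D : set pt) : sym_open_ellipsoid D -> measurable D.
Proof.
move=> [M [_ ->]].
pose F := fun x : pt => \sum_(i < n) (tnth (mxact M x) i) ^+ 2.
have mF : measurable_fun setT F.
  apply: measurable_sum => i.
  apply: measurable_realfun.measurable_funX.
  exact: (measurableT_comp (measurable_tnth i) (mxact_meas M)).
have := mF measurableT _ (measurable_itv `]-oo, 1[).
rewrite setTI; congr measurable; apply/seteqP; split => x /=;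
  by rewrite in_itv /=.
Qed.

Lemma dball_meas (A : 'M[R]_n) (D : set pt) (B : set pt) :
  dilation A -> sym_open_ellipsoid D -> dball A D B -> measurable B.
Proof.
move=> dA eD [x [k ->]].
have mD := ellipsoid_meas _ eD.
have mBk : measurable (Bk A D k).
  case: k => m /=.
  - have uA : A \in unitmx by rewrite unitmxE unitfE dil_det.
    have c1 : cancel (mxact A) (mxact (invmx A)).
      by move=> y; rewrite mxact_mul mulVmx // mxact1.
    have c2 : cancel (mxact (invmx A)) (mxact A).
      by move=> y; rewrite mxact_mul mulmxV // mxact1.
    rewrite (image_by_can _ _ _ (iter_can _ _ m c1) (iter_can _ _ m c2)).
    have := iter_meas _ m (mxact_meas (invmx A)) measurableT _ mD.
    by rewrite setTI.
  - have := iter_meas _ m.+1 (mxact_meas A) measurableT _ mD.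
    by rewrite setTI.
rewrite (image_by_can _ _ _ (taddK x) (taddK' x)).
have := tadd_meas [tuple - tnth x i | i < n] measurableT _ mBk.
by rewrite setTI.
Qed.


Lemma le_powRs (a s : R) : 0 < s <= 1 -> 0 <= a <= 1 -> a <= a `^ s.
Proof.
move=> /andP[s0 s1] /andP[a0 a1].
have [->|an0] := eqVneq a 0; first by rewrite powR_ge0.
have ap : 0 < a by rewrite lt_def an0 a0.
rewrite {1}(_ : a = (a `^ s) `^ s^-1); last first.
  by rewrite -powRrM mulfV ?gt_eqF // powRr1.
apply: ge1r_powR; last by rewrite invf_ge1.
apply/andP; split; first by rewrite powR_gt0.
have := @ge0_ler_powR R s (ltW s0) a 1; rewrite powR1; apply => //;
  by rewrite nnegrE.
Qed.

Lemma powR_subadd (x y s : R) : 0 < s <= 1 -> 0 <= x -> 0 <= y ->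
  (x + y) `^ s <= x `^ s + y `^ s.
Proof.
move=> hs x0 y0.
have [t0|tn0] := eqVneq (x + y) 0.
  by rewrite t0 powR0 ?addr_ge0 ?powR_ge0 //; case/andP: hs => /gt_eqF ->.
have tp : 0 < x + y by rewrite lt_def tn0 addr_ge0.
have key : forall z, 0 <= z <= x + y -> (x + y) `^ s * (z / (x + y)) <= z `^ s.
  move=> z /andP[z0 zt].
  rewrite [in X in _ <= X](_ : z = (x + y) * (z / (x + y))); last first.
    by rewrite mulrC -mulrA mulVf // mulr1.
  rewrite powRM; [|exact: ltW tp|by rewrite divr_ge0 // ltW].
  apply: ler_wpM2l; first exact: powR_ge0.
  apply: le_powRs => //; apply/andP; split; first by rewrite divr_ge0 // ltW.
  by rewrite ler_pdivrMr // mul1r.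
have hx := key x; have hy := key y.
have : (x + y) `^ s * (x / (x + y)) + (x + y) `^ s * (y / (x + y))
         <= x `^ s + y `^ s.
  apply: lerD; [apply: hx | apply: hy]; apply/andP; split => //;
    by rewrite ?lerDl ?lerDr.
by rewrite -mulrDr -mulrDl mulfV // mulr1.
Qed.

Lemma sum_powR m (b : 'I_m -> R) (s : R) : 0 < s <= 1 -> (forall j, 0 <= b j) ->
  \sum_(j < m) b j <= (\sum_(j < m) b j `^ s) `^ s^-1.
Proof.
move=> hs b0; have /andP[s0 s1] := hs.
have H : 0 <= \sum_(j < m) b j /\ (\sum_(j < m) b j) `^ s <= \sum_(j < m) b j `^ s.
  apply: (big_rec2 (fun y1 y2 => 0 <= y1 /\ y1 `^ s <= y2)).
    by rewrite powR0 ?gt_eqF.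
  move=> i y1 y2 _ [y10 hy]; split; first by rewrite addr_ge0.
  apply: le_trans (powR_subadd _ _ _ hs (b0 i) y10) _.
  by rewrite lerD2l.
case: H => S0 HS.
have -> : \sum_(j < m) b j = ((\sum_(j < m) b j) `^ s) `^ s^-1.
  by rewrite -powRrM mulfV ?gt_eqF // powRr1.
apply: ge0_ler_powR => //; rewrite ?invr_ge0 ?ltW // nnegrE ?powR_ge0 //.
exact: le_trans (powR_ge0 _ _) HS.
Qed.

End Helpers.


Theorem proposition3p9 (R : realType) (n : nat)
    (mu : {measure set (n.-tuple R) -> \bar R})
    (A : 'M[R]_n) (D : set (n.-tuple R)) (r : R)
    (normX : (n.-tuple R -> R) -> \bar R) (q : R) (d : nat) (s : R) :
  (0 < n)%N ->
  is_lebesgue mu ->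
  dilation A ->
  sym_open_ellipsoid D -> mu D = 1%E ->
  1 < r -> D `<=` image_by (tscale r) D ->
  image_by (tscale r) D `<=` image_by (mxact A) D ->
  ball_qBfs mu A D normX -> concave_space normX ->
  1 <= q -> 0 < s <= 1 ->
  (forall f, Lqloc mu q f ->
     ((normLs mu A D normX q d s f < +oo)%E <-> (normL mu A D normX q d f < +oo)%E)) /\
  exists C : R, 0 < C /\ forall f, Lqloc mu q f ->
     (normLs mu A D normX q d s f <= C%:E * normL mu A D normX q d f)%E /\
     (normL mu A D normX q d f <= C%:E * normLs mu A D normX q d s f)%E.
Proof.
Local Open Scope ereal_scope.
move=> _ _ dA eD _ _ _ _ [nn [_ [hom [_ [_ [mono [_ fin1]]]]]]] [Cc [Cc0 conc]] _ hs.
have /andP[s0 s1] := hs.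
have mI : forall B, dball A D B -> measurable_fun setT (\1_B : n.-tuple R -> R).
  by move=> B dB; apply: measurable_realfun.measurable_indic; exact: dball_meas dB.
have hNe : forall B, dball A D B ->
    normX (\1_B) = (fine (normX (\1_B)))%:E.
  move=> B dB; rewrite fineK // ge0_fin_numE //; exact: fin1.
have hN0 : forall B, (0 <= fine (normX (\1_B)))%R.
  by move=> B; exact: fine_ge0 (nn _).
have osc0 : forall B f, (0 <= osc mu q d B f)%R by move=> B f; exact: powR_ge0.
have elem0 : forall B f,
    (0 <= fine (mu B) / fine (normX (\1_B)) * osc mu q d B f)%R.
  move=> B f; apply: mulr_ge0 => //; apply: divr_ge0 => //.
pose x0 : n.-tuple R := [tuple 0%R | i < n].
pose B0 := image_by (tadd x0) (Bk A D 0).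
have dB0 : dball A D B0 by exists x0, 0%R.
have L0 : forall f, 0 <= normL mu A D normX q d f.
  move=> f; apply: le_trans (ereal_sup_ubound _); last by exists B0.
  by rewrite lee_fin.
have Lle : forall f, normL mu A D normX q d f <= normLs mu A D normX q d s f.
  move=> f; apply: ereal_sup_le => v [B dB <-].
  exists 1%N, (fun _ => B), (fun _ => 1%R); split => //.
    by rewrite big_ord1 oner_neq0.
  congr EFin.
  set NB := fine (normX (\1_B)).
  have gE : (fun x => (\sum_(i < 1) (1 / NB) `^ s * \1_B x) `^ s^-1)%R
            = (fun x => NB^-1 * \1_B x)%R.
    apply: funext => x; rewrite big_ord1 indicE.
    case: (x \in B) => /=.
      rewrite !mulr1 -powRrM mulfV ?gt_eqF // powRr1 ?div1r //.
      by rewrite invr_ge0; exact: hN0.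
    by rewrite !mulr0 powR0 // invr_eq0 gt_eqF.
  rewrite big_ord1 gE.
  have [N0|Nn0] := eqVneq NB 0%R.
    by rewrite N0 invr0 !mulr0 !mul0r.
  rewrite hom; last 2 first.
  - exact: mI.
  - exact: fin1.
  rewrite (hNe _ dB) -/NB -EFinM /= ger0_norm; last by rewrite invr_ge0; exact: hN0.
  by rewrite mulVf // divr1 mul1r.
have Ls0 : forall f, 0 <= normLs mu A D normX q d s f.
  by move=> f; exact: le_trans (L0 f) (Lle f).
have Lsle : forall f,
    normLs mu A D normX q d s f <= (Cc + 1)%:E * normL mu A D normX q d f.
  move=> f.
  have := L0 f; case E : (normL mu A D normX q d f) => [L| |] // L0'; last first.
    by rewrite gt0_muley ?leey // lte_fin; lra.
  rewrite lee_fin in L0'.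
  have elemL : forall B, dball A D B ->
      (fine (mu B) / fine (normX (\1_B)) * osc mu q d B f <= L)%R.
    move=> B dB; rewrite -lee_fin -E; apply: ereal_sup_ubound; by exists B.
  apply: ge_ereal_sup => v [m [B [lam [dB lam0 lamS ->]]]].
  rewrite -EFinM lee_fin.
  set g := (fun x => _) : n.-tuple R -> R.
  set G := fine (normX g).
  have G0 : (0 <= G)%R by apply: fine_ge0.
  have [G00|Gn0] := eqVneq G 0%R.
    by rewrite G00 invr0 mulr0; apply: mulr_ge0 => //; lra.
  have Gp : (0 < G)%R by rewrite lt_def Gn0.
  have gfin : normX g = G%:E.
    rewrite /G; case E' : (normX g) => [x| |] //=.
      by move: Gn0; rewrite /G E' /= eqxx.
    by have := nn g; rewrite E'.
  pose a := fun j : 'I_m => (lam j / fine (normX (\1_(B j))))%R.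
  have a0 : forall j, (0 <= a j)%R by move=> j; apply: divr_ge0.
  have step1 : (\sum_(j < m) lam j * fine (mu (B j)) / fine (normX (\1_(B j)))
                   * osc mu q d (B j) f
               <= L * \sum_(j < m) a j * fine (normX (\1_(B j))))%R.
    rewrite mulr_sumr; apply: ler_sum => j _; rewrite /a.
    have [N0|Nn0] := eqVneq (fine (normX (\1_(B j)))) 0%R.
      by rewrite N0 invr0 !mulr0 !mul0r.
    rewrite mulfVK // -!mulrA mulrC; apply: ler_wpM2r => //.
    by rewrite mulrA; exact: elemL.
  pose fk := fun (k : nat) (x : n.-tuple R) =>
    (if (insub k : option 'I_m) is Some j then a j * \1_(B j) x else 0)%R.
  have fkE : forall j : 'I_m, fk j = (fun x => a j * \1_(B j) x)%R.
    by move=> j; rewrite /fk valK.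
  have fk0 : forall k x, (0 <= fk k x)%R.
    move=> k x; rewrite /fk; case: insub => [j|//].
    by apply: mulr_ge0 => //; rewrite indicE ler0n.
  have mfk : forall k, measurable_fun setT (fk k).
    move=> k; rewrite /fk; case: insub => [j|]; last exact: measurable_cst.
    by apply: measurable_realfun.measurable_funM => //; exact: mI.
  have := conc m fk mfk.
  under eq_bigr => j _ do rewrite fkE (hom _ _ (mI _ (dB j)) (fin1 _ (dB j))) (hNe _ (dB j)) -EFinM (ger0_norm (a0 j)).
  rewrite sumEFin.
  have hE : (fun x => \sum_(k < m) `|fk k x|)%R = (fun x => \sum_(k < m) fk k x)%R.
    by apply: funext => x; apply: eq_bigr => k _; rewrite ger0_norm.
  rewrite hE => hconc.
  have hle : normX (fun x => \sum_(k < m) fk k x)%R <= G%:E.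
    rewrite -gfin; apply: mono.
    - rewrite /g.
      apply: (measurableT_comp (f := fun y : R => y `^ s^-1)
        (g := fun x => \sum_(i < m) (lam i / fine (normX (\1_(B i)))) `^ s * \1_(B i) x)%R).
        exact: measurable_realfun.measurable_powR.
      apply: measurable_sum => k.
      by apply: measurable_realfun.measurable_funM => //; exact: mI.
    - by apply: measurable_sum => k; exact: mfk.
    - apply: aeW => x; rewrite /g (ger0_norm (powR_ge0 _ _)) ger0_norm; last first.
        by apply: sumr_ge0 => k _; exact: fk0.
      under eq_bigr => k _ do rewrite fkE.
      have -> : (\sum_(i < m) (lam i / fine (normX (\1_(B i)))) `^ s * \1_(B i) x)%R
             = (\sum_(i < m) (a i * \1_(B i) x) `^ s)%R.
        apply: eq_bigr => i _; rewrite /a indicE.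
        case: (x \in B i) => /=; first by rewrite !mulr1.
        by rewrite !mulr0 powR0 // gt_eqF.
      apply: sum_powR => // i.
      by apply: mulr_ge0 => //; rewrite indicE ler0n.
  have step2 : (\sum_(j < m) a j * fine (normX (\1_(B j))) <= Cc * G)%R.
    rewrite -lee_fin EFinM; apply: le_trans hconc _.
    by apply: lee_wpmul2l => //; rewrite lee_fin ltW.
  rewrite ler_pdivrMr //.
  apply: le_trans step1 _.
  apply: le_trans (_ : (L * (Cc * G) <= _)%R).
    by apply: ler_wpM2l.
  nra.
split.
  move=> f _; split => h.
    exact: le_lt_trans (Lle f) h.
  apply: le_lt_trans (Lsle f) _.
  have := L0 f; move: h; case: (normL mu A D normX q d f) => [L| |] //.
  by move=> _ _; rewrite -EFinM ltry.
exists (Cc + 1)%R; split; first lra.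
move=> f _; split; first exact: Lsle.
apply: le_trans (Lle f) _.
rewrite -{1}(mul1e (normLs mu A D normX q d s f)).
apply: lee_wpmul2r => //; rewrite lee_fin; lra.
Qed.
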